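(* Let $M=M_1\oplus M_2$ be a right $R$-module that is quasi-pseudo principally injective. Then $M_1$ is principally $M_2$-injective and $M_2$ is principally $M_1$-injective.
   Context: All rings are associative with identity and all modules are unitary right $R$-modules. A submodule $N$ of $M$ is called $M$-cyclic if $N\cong M/L$ for some submodule $L$ of $M$ (equivalently, $N$ is the image of an endomorphism of $M$). $M$ is quasi-pseudo principally injective if for every $M$-cyclic submodule $A$ of $M$, every $R$-monomorphism $A\to M$ extends to an $R$-endomorphism of $M$. For modules $X,Y$, $X$ is principally $Y$-injective if for every $Y$-cyclic submodule $A$ of $Y$, every $R$-homomorphism $A\to X$ extends to an $R$-homomorphism $Y\to X$. *)

(* Defs.v *)
(* Right R-modules are modelled as left modules over the
   converse ring R^c: the right action x.r is written  r *: x. *)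
From HB Require Import structures.
From mathcomp Require Import all_boot all_order all_algebra.
Set Implicit Arguments. Unset Strict Implicit. Unset Printing Implicit Defensive.
Import GRing.Theory.
Local Open Scope ring_scope.

Notation rmodType R := (lmodType (R^c)%type).

Section Defs.
Variable R : pzRingType.

(* A (Prop-valued) subset A of Y is Y-cyclic: A is the image of an
   R-endomorphism of Y (such a set is automatically a submodule). *)
Definition is_cyclic_sub (Y : rmodType R) (A : Y -> Prop) : Prop :=
  exists h : {linear Y -> Y}, forall x, A x <-> exists y, x = h y.

Definition hom_on (Y X : rmodType R) (A : Y -> Prop) (f : Y -> X) : Prop :=
  (forall x y, A x -> A y -> f (x + y) = f x + f y) /\
  (forall (r : R^c) x, A x -> f (r *: x) = r *: f x).

Definition mono_on (Y X : rmodType R) (A : Y -> Prop) (f : Y -> X) : Prop :=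
  hom_on A f /\ (forall x y, A x -> A y -> f x = f y -> x = y).

Definition qppi (M : rmodType R) : Prop :=
  forall (A : M -> Prop) (f : M -> M), is_cyclic_sub A -> mono_on A f ->
    exists g : {linear M -> M}, forall x, A x -> g x = f x.

Definition princ_inj (X Y : rmodType R) : Prop :=
  forall (A : Y -> Prop) (f : Y -> X), is_cyclic_sub A -> hom_on A f ->
    exists g : {linear Y -> X}, forall x, A x -> g x = f x.

End Defs.

(* Main.v *)
Require Import Defs.
From HB Require Import structures.
From mathcomp Require Import all_boot all_order all_algebra.
Import GRing.Theory.

Local Open Scope ring_scope.

Definition mkLin (K : pzRingType) (U V : lmodType K) (f : U -> V) (H : linear f) : {linear U -> V} :=
  HB.pack f (GRing.isLinear.Build _ _ _ _ f H).

Lemma dir1 (R : pzRingType) (M1 M2 : rmodType R) :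
  qppi (M1 * M2)%type -> princ_inj M1 M2.
Proof.
move=> Q A f [h Hh] [fD fZ].
pose k := fun p : (M1 * M2)%type => ((0 : M1), h p.2).
have kL : linear k.
  by move=> a u v; rewrite /k /= linearP; congr pair; rewrite /= ?scaler0 ?addr0.
pose B := fun p : (M1 * M2)%type => exists z, p = k z.
pose F := fun p : (M1 * M2)%type => (f p.2, p.2).
have B2 : forall p, B p -> A p.2 /\ p.1 = 0.
  move=> p [z ->]; split => //; apply/Hh; by exists z.2.
have cB : is_cyclic_sub B by exists (@mkLin _ _ _ k kL).
have mF : mono_on B F.
  split; [split|].
  - move=> x y /B2 [Ax _] /B2 [Ay _]; rewrite /F /= fD //.
  - move=> r x /B2 [Ax _]; rewrite /F /= fZ //.
  - move=> [x1 x2] [y1 y2] /B2 [_ /= ->] /B2 [_ /= ->] [_ ->] //.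
have [g Hg] := Q B F cB mF.
pose g' := fun y : M2 => (g ((0 : M1), y)).1.
have gL : linear g'.
  move=> a u v; rewrite /g'.
  have -> : ((0 : M1), a *: u + v) = a *: ((0:M1), u) + ((0:M1), v).
    by congr pair; rewrite /= ?scaler0 ?addr0.
  by rewrite linearP.
exists (@mkLin _ _ _ g' gL) => x Ax /=.
rewrite /g' Hg //.
have [y ->] := (Hh x).1 Ax.
by exists ((0:M1), y).
Qed.

Lemma dir2 (R : pzRingType) (M1 M2 : rmodType R) :
  qppi (M1 * M2)%type -> princ_inj M2 M1.
Proof.
move=> Q A f [h Hh] [fD fZ].
pose k := fun p : (M1 * M2)%type => (h p.1, (0 : M2)).
have kL : linear k.
  by move=> a u v; rewrite /k /= linearP; congr pair; rewrite /= ?scaler0 ?addr0.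
pose B := fun p : (M1 * M2)%type => exists z, p = k z.
pose F := fun p : (M1 * M2)%type => (p.1, f p.1).
have B2 : forall p, B p -> A p.1 /\ p.2 = 0.
  move=> p [z ->]; split => //; apply/Hh; by exists z.1.
have cB : is_cyclic_sub B by exists (@mkLin _ _ _ k kL).
have mF : mono_on B F.
  split; [split|].
  - move=> x y /B2 [Ax _] /B2 [Ay _]; rewrite /F /= fD //.
  - move=> r x /B2 [Ax _]; rewrite /F /= fZ //.
  - move=> [x1 x2] [y1 y2] /B2 [_ /= ->] /B2 [_ /= ->] [-> _] //.
have [g Hg] := Q B F cB mF.
pose g' := fun y : M1 => (g (y, (0 : M2))).2.
have gL : linear g'.
  move=> a u v; rewrite /g'.
  have -> : (a *: u + v, (0 : M2)) = a *: (u, (0:M2)) + (v, (0:M2)).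
    by congr pair; rewrite /= ?scaler0 ?addr0.
  by rewrite linearP.
exists (@mkLin _ _ _ g' gL) => x Ax /=.
rewrite /g' Hg //.
have [y ->] := (Hh x).1 Ax.
by exists (y, (0:M2)).
Qed.

Theorem proposition2p9 (R : pzRingType) (M1 M2 : rmodType R) :
  qppi (M1 * M2)%type -> princ_inj M1 M2 /\ princ_inj M2 M1.
Proof.
by move=> Q; split; [apply: dir1 | apply: dir2].
Qed.
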